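(* Let $t<k\le n$ and $\lambda$ be positive integers. If there exist a Steiner system S$(t,k,n)$ and a perpendicular array PA$_\lambda(k,n,n)$, then there exists a large set with multiplicity LS$(t,k,n;\mu)$, where $\mu=\lambda\binom{n}{t}\big/\binom{k}{t}$.
   Context: A Steiner system S$(t,k,n)$ is a pair $(Q,B)$ where $Q$ is an $n$-set and $B$ is a collection of $k$-subsets (blocks) of $Q$ such that every $t$-subset of $Q$ is contained in exactly one block. A large set with multiplicity $\mu$, LS$(t,k,n;\mu)$, is a family (the same system may occur more than once) of Steiner systems S$(t,k,n)$ on a common $n$-set $Q$ such that every $k$-subset of $Q$ is a block of exactly $\mu$ of the systems. A perpendicular array PA$_\lambda(k,\ell,n)$ is a $\lambda\binom{n}{k}\times \ell$ matrix with entries from an $n$-set such that each row has $\ell$ distinct entries and, in the submatrix formed by any $k$ columns, each $k$-subset of the $n$-set occurs (as the set of entries of a row) exactly $\lambda$ times; for $\ell=n$ its rows are permutations of the $n$-set. *)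

(* Defs.v *)
From mathcomp Require Import all_boot.
Unset Printing Implicit Defensive.

Definition steiner_system (t k n : nat) (B : {set {set 'I_n}}) : Prop :=
  (forall b, b \in B -> #|b| = k) /\
  (forall T : {set 'I_n}, #|T| = t -> exists! b, b \in B /\ T \subset b).

(* Large set with multiplicity mu: a family (list, repetitions allowed) of
   Steiner systems S(t,k,n) on 'I_n, every k-subset being a block of exactly
   mu members of the family (counted with multiplicity). *)
Definition large_set (t k n mu : nat) (F : seq {set {set 'I_n}}) : Prop :=
  (forall B : {set {set 'I_n}}, B \in F -> steiner_system t k n B) /\
  (forall K : {set 'I_n}, #|K| = k -> count (fun B : {set {set 'I_n}} => K \in B) F = mu).

(* Perpendicular array PA_lambda(k,l,n): a (lambda * C(n,k)) x l matrix with
   entries in 'I_n, given as the list of its rows (row r has entry r j in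
   column j); rows have distinct entries, and for every set C of k columns,
   every k-subset S of 'I_n is the set of entries of exactly lambda rows
   restricted to C. *)
Definition perpendicular_array (lambda k l n : nat)
    (M : seq {ffun 'I_l -> 'I_n}) : Prop :=
  size M = lambda * 'C(n, k) /\
  (forall r : {ffun 'I_l -> 'I_n}, r \in M -> injective r) /\
  (forall (C : {set 'I_l}) (S : {set 'I_n}), #|C| = k -> #|S| = k ->
     count (fun r : {ffun 'I_l -> 'I_n} => r @: C == S) M = lambda).

(* Main.v *)
Require Import Defs.
From mathcomp Require Import all_boot.

Lemma count_sumn (T : eqType) (P : pred T) (s : seq T) :
  count P s = \sum_(x <- s) (P x : nat).
Proof. by elim: s => [|x s IH]; rewrite ?big_nil ?big_cons //= IH. Qed.

Lemma sum_bool (T : finType) (P Q : pred T) :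
  \sum_(i | P i) (Q i : nat) = #|[set i | P i & Q i]|.
Proof.
rewrite -sum1_card big_mkcond [RHS]big_mkcond /=.
by apply: eq_bigr => i _; rewrite inE; case: (P i); case: (Q i).
Qed.

Lemma steiner_card (t k n : nat) (B : {set {set 'I_n}}) :
  steiner_system t k n B -> #|B| * 'C(k, t) = 'C(n, t).
Proof.
move=> [Bk Bu].
have -> : 'C(n, t) = \sum_(T : {set 'I_n} | #|T| == t) \sum_(b in B) (T \subset b : nat).
  rewrite -{1}(card_ord n) -card_draws -sum1_card.
  apply: eq_big => [T|T]; first by rewrite inE.
  rewrite inE => HT; have {HT} /eqP HT : #|T| == t by move: HT; case: (#|T| == t).
  have [b0 [[b0B Tb0] U]] := Bu T HT.
  rewrite (@sum_bool _ (mem B) (fun b => T \subset b)).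
  have -> : [set b | b \in B & T \subset b] = [set b0].
    apply/setP => b; rewrite !inE; apply/andP/eqP => [[bB Tb]|->] //.
    by symmetry; apply: U.
  by rewrite cards1.
rewrite exchange_big /= -sum_nat_const.
apply: eq_bigr => b bB.
rewrite (@sum_bool _ (fun T : {set 'I_n} => #|T| == t) (fun T => T \subset b)).
rewrite -(Bk b bB) -cards_draws; apply: eq_card => T; rewrite !inE andbC //.
Qed.

Theorem theorem8 (t k n lambda : nat) :
  0 < t -> t < k -> k <= n -> 0 < lambda ->
  (exists B : {set {set 'I_n}}, steiner_system t k n B) ->
  (exists M : seq {ffun 'I_n -> 'I_n}, perpendicular_array lambda k n n M) ->
  exists F : seq {set {set 'I_n}},
    large_set t k n (lambda * 'C(n, t) %/ 'C(k, t)) F.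
Proof.
move=> t0 tk kn l0 [B SB] [M [sizeM [inj cnt]]].
have Hc := @steiner_card _ _ _ _ SB.
have -> : lambda * 'C(n, t) %/ 'C(k, t) = lambda * #|B|.
  by rewrite -Hc mulnA mulnK // bin_gt0 ltnW.
case: SB => Bk Bu.
exists [seq [set r @: b | b : {set 'I_n} in B] | r : {ffun 'I_n -> 'I_n} <- M]; split.
  move=> Bs /mapP [r rM ->]; have ir := inj r rM; split.
    by move=> b' /imsetP [b bB ->]; rewrite card_imset // Bk.
  move=> T HT.
  have [g rg gr] := injF_bij ir.
  have [b [[bB Tb] U]] := Bu (r @^-1: T) (etrans (card_preimset _ ir) HT).
  exists (r @: b); split.
    split; first exact: imset_f.
    apply/subsetP => x xT; rewrite -(gr x); apply: imset_f.
    by apply: (subsetP Tb); rewrite inE gr.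
  move=> b2 [/imsetP [b3 b3B ->] Tb3].
  have Tb3' : r @^-1: T \subset b3.
    apply/subsetP => y; rewrite inE => /(subsetP Tb3) /imsetP [z zb3 /ir ->] //.
  by rewrite (U b3).
move=> K HK.
rewrite count_map count_sumn.
have -> : \sum_(r <- M) (preim (fun r : {ffun 'I_n -> 'I_n} => [set r @: b | b : {set 'I_n} in B])
            (fun Bs => K \in Bs) r : nat)
          = \sum_(r <- M) \sum_(b in B) (r @: b == K : nat).
  rewrite big_seq_cond [RHS]big_seq_cond; apply: eq_bigr => r /andP [rM _].
  have ir := inj r rM.
  rewrite (@sum_bool _ (mem B) (fun b => r @: b == K)) /=.
  case: (boolP (K \in [set r @: b | b : {set 'I_n} in B])) => [/imsetP [b0 b0B ->]|nK].
    have -> : [set b | b \in B & r @: b == r @: b0] = [set b0].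
      apply/setP => b; rewrite !inE; apply/andP/eqP => [[bB /eqP]|->] //.
      exact: imset_inj.
    by rewrite cards1.
  have -> : [set b | b \in B & r @: b == K] = set0.
    apply/setP => b; rewrite !inE; apply/negP => /andP [bB /eqP E].
    by move: nK; rewrite -E imset_f.
  by rewrite cards0.
rewrite exchange_big /= mulnC -sum_nat_const.
apply: eq_bigr => b bB; rewrite -count_sumn.
exact: cnt (Bk b bB) HK.
Qed.
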